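(* Let $(R,\cdot,\alpha)$ be a non-unital hom-associative ring, let $\sigma$ be a ring endomorphism of $R$ and $\delta$ a $\sigma$-derivation of $R$, and assume $\alpha\circ\delta=\delta\circ\alpha$ and $\alpha\circ\sigma=\sigma\circ\alpha$. Extend $\alpha$ homogeneously to $R[X;\sigma,\delta]$. Then $R[X;\sigma,\delta]$ is hom-associative with this twisting map.
   Context: A hom-associative ring is a triple $(R,\cdot,\alpha)$ where $R$ is an abelian group with a biadditive (not necessarily associative or unital) multiplication $\cdot$ and an additive map $\alpha\colon R\to R$ satisfying $\alpha(a)\cdot(b\cdot c)=(a\cdot b)\cdot\alpha(c)$ for all $a,b,c$. A $\sigma$-derivation is an additive map $\delta\colon R\to R$ with $\delta(a\cdot b)=\sigma(a)\cdot\delta(b)+\delta(a)\cdot b$ for all $a,b\in R$. $\mathbb{N}$ denotes the non-negative integers. For $m\in\mathbb{N}$ and $0\le i\le m$, $\pi_i^m\colon R\to R$ denotes the sum of all $\binom{m}{i}$ compositions of $i$ copies of $\sigma$ and $m-i$ copies of $\delta$ in arbitrary order ($\pi_0^0=\mathrm{id}_R$), and $\pi_i^m:=0$ if $i<0$ or $i>m$. The non-unital, non-associative Ore extension $R[X;\sigma,\delta]$ is the set of formal sums $\sum_{i\in\mathbb{N}}a_iX^i$ with $a_i\in R$, finitely many nonzero, with coefficientwise addition and the distributive multiplication determined by $aX^m\cdot bX^n=\sum_{i\in\mathbb{N}}(a\cdot\pi_i^m(b))X^{i+n}$. The homogeneous extension of $\alpha$ is $\alpha\left(\sum_ia_iX^i\right):=\sum_i\alpha(a_i)X^i$.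 Hom-associativity of $R[X;\sigma,\delta]$ means $\alpha(u)(vw)=(uv)\alpha(w)$ for all $u,v,w\in R[X;\sigma,\delta]$. *)

(* Defs.v *)
From HB Require Import structures.
From mathcomp Require Import all_boot all_order all_algebra.
Set Implicit Arguments. Unset Strict Implicit. Unset Printing Implicit Defensive.
Import GRing.Theory.
Local Open Scope ring_scope.

Section Ore.
Variable R : zmodType.

(* Composition of a word in {sigma, delta}: true = sigma, false = delta;
   the word [:: c1; ...; cm] denotes c1 o c2 o ... o cm. *)
Definition word_comp (sigma delta : R -> R) (w : seq bool) (b : R) : R :=
  foldr (fun (c : bool) (x : R) => if c then sigma x else delta x) b w.

(* pi_i^m(b): sum of all compositions of i copies of sigma and m-i copies
   of delta (in arbitrary order); it is 0 when i > m (empty sum). *)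
Definition pi_ore (sigma delta : R -> R) (i m : nat) (b : R) : R :=
  \sum_(w : m.-tuple bool | count id w == i) word_comp sigma delta w b.

(* Elements of R[X;sigma,delta] are represented by coefficient lists
   (u`_k is the coefficient of X^k); equality of elements is
   coefficientwise equality [ore_eq]. *)
Definition ore_coef (mul : R -> R -> R) (sigma delta : R -> R)
    (u v : seq R) (k : nat) : R :=
  \sum_(m < size u) \sum_(n < size v)
     (if (n <= k)%N then mul u`_m (pi_ore sigma delta (k - n) m v`_n) else 0).

Definition ore_mul (mul : R -> R -> R) (sigma delta : R -> R)
    (u v : seq R) : seq R :=
  mkseq (ore_coef mul sigma delta u v) (size u + size v).

Definition ore_alpha (alpha : R -> R) (u : seq R) : seq R := map alpha u.

Definition ore_eq (u v : seq R) : Prop := forall k : nat, u`_k = v`_k.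

End Ore.

(* Main.v *)
Require Import Defs.
From HB Require Import structures.
From mathcomp Require Import all_boot all_order all_algebra zify.
Import GRing.Theory.
Local Open Scope ring_scope.

Section G.
Variable R : zmodType.

Lemma widen_sum N B (F : nat -> R) : (N <= B)%N -> (forall i, (N <= i)%N -> (i < B)%N -> F i = 0) ->
  \sum_(i < N) F i = \sum_(i < B) F i.
Proof.
move=> NB H; rewrite (big_ord_widen _ _ NB) big_mkcond /=; apply: eq_bigr => i _.
by case: ifP => // /negbT; rewrite -leqNgt => Ni; rewrite H.
Qed.

Lemma reindex_shift B p (f : nat -> nat -> R) :
  (forall i, (B <= i + p)%N -> (i < B)%N -> f i (i + p)%N = 0) ->
  \sum_(i < B) f i (i + p)%N = \sum_(m < B) (if (p <= m)%N then f (m - p)%N m else 0).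
Proof.
move=> H; rewrite -(big_mkord xpredT (fun i => f i (i + p)%N)) -(big_mkord xpredT (fun m => if (p <= m)%N then f (m - p)%N m else 0)).
case: (leqP p B) => pB.
  rewrite [RHS](big_cat_nat (leq0n p) pB) /= [X in X + _](_ : _ = 0) ?add0r; last first.
    by rewrite big_nat_cond big1 // => m /andP [/andP [_ mp] _]; rewrite leqNgt mp.
  rewrite [RHS](_ : _ = \sum_((0 + p)%N <= i < B) (if (p <= i)%N then f (i - p)%N i else 0)) ?big_addn; last by [].
  rewrite [LHS](big_cat_nat (leq0n (B - p)) (leq_subr _ _)) /= [X in _ + X](_ : _ = 0) ?addr0; last first.
    by rewrite big_nat_cond big1 // => i /andP [/andP [h1 h2] _]; apply: H; lia.
  by apply: eq_bigr => i _; rewrite leq_addl addnK.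
rewrite big_nat_cond big1; last by move=> i /andP [/andP [_ h] _]; apply: H; lia.
rewrite big_nat_cond big1 // => m /andP [/andP [_ h] _].
have -> : (p <= m)%N = false by apply/negbTE; rewrite -ltnNge; lia.
by [].
Qed.
End G.

Section S.
Variable R : zmodType.
Variable sigma delta : R -> R.
Variable sigmaD : forall a b, sigma (a + b) = sigma a + sigma b.
Variable deltaD : forall a b, delta (a + b) = delta a + delta b.

Local Notation Q := (pi_ore sigma delta).

Lemma sigma0 : sigma 0 = 0.
Proof. have h := sigmaD 0 0; rewrite addr0 in h. by apply: (addrI (sigma 0)); rewrite addr0 -h. Qed.

Lemma delta0 : delta 0 = 0.
Proof. have h := deltaD 0 0; rewrite addr0 in h. by apply: (addrI (delta 0)); rewrite addr0 -h. Qed.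

Lemma Q_rec j m x : Q j m.+1 x =
  (if j is j'.+1 then sigma (Q j' m x) else 0) + delta (Q j m x).
Proof.
rewrite /pi_ore.
pose h := fun p : bool * m.-tuple bool => [tuple of p.1 :: p.2].
have hb : bijective h.
  exists (fun t : m.+1.-tuple bool => (thead t, [tuple of behead t])).
    by case=> b t; congr pair; apply/val_inj.
  by move=> t; case: t / tupleP => b t; apply/val_inj.
rewrite (reindex h); last by apply: onW_bij.
transitivity (\sum_(b : bool) \sum_(t : m.-tuple bool | count id (b :: t) == j)
   word_comp sigma delta (b :: t) x).
  by rewrite pair_big_dep; apply: eq_big.
rewrite big_bool /=.
have dsum : forall (P : pred (m.-tuple bool)) F, delta (\sum_(t | P t) F t) = \sum_(t | P t) delta (F t).
  by move=> P F; apply: (big_morph delta deltaD delta0).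
have ssum : forall (P : pred (m.-tuple bool)) F, sigma (\sum_(t | P t) F t) = \sum_(t | P t) sigma (F t).
  by move=> P F; apply: (big_morph sigma sigmaD sigma0).
rewrite dsum; congr (_ + _).
case: j => [|j]; first by rewrite big_pred0.
by rewrite ssum; apply: eq_bigl => t; rewrite add1n eqSS.
Qed.

Lemma Q_base j x : Q j 0 x = if j == 0%N then x else 0.
Proof.
rewrite /pi_ore; case: j => [|j] /=.
  rewrite (eq_bigl (pred1 [tuple])); first by rewrite big_pred1_eq.
  by move=> t; rewrite tuple0 /=.
by rewrite big_pred0 // => t; rewrite tuple0.
Qed.

Lemma QD j m x y : Q j m (x + y) = Q j m x + Q j m y.
Proof.
elim: m j => [|m IH] j.
  by rewrite !Q_base; case: eqP => //; rewrite addr0.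
rewrite !Q_rec IH deltaD; case: j => [|j]; first by rewrite !add0r.
rewrite IH sigmaD; rewrite -!addrA; congr (_ + _).
by rewrite addrCA.
Qed.

Lemma Q0 j m : Q j m 0 = 0.
Proof. have h := QD j m 0 0; rewrite addr0 in h. by apply: (addrI (Q j m 0)); rewrite addr0 -h. Qed.

Lemma Q_sum j m I (r : seq I) (P : pred I) (F : I -> R) :
  Q j m (\sum_(i <- r | P i) F i) = \sum_(i <- r | P i) Q j m (F i).
Proof. by apply: (big_morph (Q j m) (QD j m) (Q0 j m)). Qed.

Lemma Q_gt j m x : (m < j)%N -> Q j m x = 0.
Proof.
elim: m j => [|m IH] j.
  by rewrite Q_base; case: j.
rewrite Q_rec; case: j => [|j] // H.
by rewrite !IH ?sigma0 ?delta0 ?addr0 // ltnW.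
Qed.

Lemma sigma_sum I (r : seq I) (P : pred I) (F : I -> R) :
  sigma (\sum_(i <- r | P i) F i) = \sum_(i <- r | P i) sigma (F i).
Proof. by apply: (big_morph sigma sigmaD sigma0). Qed.
Lemma delta_sum I (r : seq I) (P : pred I) (F : I -> R) :
  delta (\sum_(i <- r | P i) F i) = \sum_(i <- r | P i) delta (F i).
Proof. by apply: (big_morph delta deltaD delta0). Qed.

Lemma Q_comp B a b x k q : (q <= k)%N -> (k < B)%N ->
  Q (k - q) (a + b) x = \sum_(n < B) (if (q <= n <= k)%N then Q (k - n) a (Q (n - q) b x) else 0).
Proof.
elim: a k => [|a IH] k qk kB.
  rewrite (bigD1 (Ordinal kB)) //= qk leqnn subnn Q_base /= big1 ?addr0 // => n nk.
  case: ifP => // /andP [_ nk']; rewrite Q_base.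
  have : (k - n != 0)%N.
    by rewrite subn_eq0 -ltnNge ltn_neqAle nk' andbT; apply: contra nk => /eqP h; apply/eqP/val_inj.
  by move/negbTE => ->.
rewrite addSn Q_rec.
have split : forall n : 'I_B, (if (q <= n <= k)%N then Q (k - n) a.+1 (Q (n - q) b x) else 0) =
   (if (q <= n <= k)%N then (if (k - n)%N is j'.+1 then sigma (Q j' a (Q (n - q) b x)) else 0) else 0)
   + delta (if (q <= n <= k)%N then Q (k - n) a (Q (n - q) b x) else 0).
  by move=> n; rewrite Q_rec; case: ifP => _; rewrite ?delta0 ?addr0.
rewrite (eq_bigr _ (fun n _ => split n)) big_split /= -delta_sum -IH //; congr (_ + _).
case Ekq: (k - q)%N => [|j].
  rewrite big1 // => n _; case: ifP => // /andP [qn nk].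
  have -> : (k - n = 0)%N by apply/eqP; rewrite subn_eq0 (leq_trans _ qn) // -subn_eq0 Ekq.
  by [].
clear split; case: k Ekq qk kB IH => [|k] Ekq qk kB IH; first by rewrite sub0n in Ekq.
have qk' : (q <= k)%N by rewrite -ltnS -subn_gt0 Ekq.
have -> : j = (k - q)%N by rewrite subSn in Ekq => //; case: Ekq.
rewrite (IH k) // ?(ltn_trans _ kB) // sigma_sum; apply: eq_bigr => n _.
case: (ltngtP n k.+1) => nk.
- rewrite ltnS in nk; rewrite nk subSn //.
  by case: ifP; rewrite ?sigma0.
- by rewrite [(n <= k)%N]leqNgt (ltnW nk) /= andbF sigma0.
- by rewrite nk ltnn andbF subnn sigma0; case: ifP.
Qed.

Variable mul : R -> R -> R.
Variable mulDl : forall a b c, mul (a + b) c = mul a c + mul b c.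
Variable mulDr : forall a b c, mul a (b + c) = mul a b + mul a c.
Variable sigmaM : forall a b, sigma (mul a b) = mul (sigma a) (sigma b).
Variable deltaM : forall a b, delta (mul a b) = mul (sigma a) (delta b) + mul (delta a) b.

Lemma mul0l c : mul 0 c = 0.
Proof. have h := mulDl 0 0 c; rewrite addr0 in h. by apply: (addrI (mul 0 c)); rewrite addr0 -h. Qed.
Lemma mul0r c : mul c 0 = 0.
Proof. have h := mulDr c 0 0; rewrite addr0 in h. by apply: (addrI (mul c 0)); rewrite addr0 -h. Qed.
Lemma mul_suml c I (r : seq I) (P : pred I) (F : I -> R) :
  mul (\sum_(i <- r | P i) F i) c = \sum_(i <- r | P i) mul (F i) c.
Proof. by apply: (big_morph (mul^~ c) (fun a b => mulDl a b c) (mul0l c)). Qed.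
Lemma mul_sumr c I (r : seq I) (P : pred I) (F : I -> R) :
  mul c (\sum_(i <- r | P i) F i) = \sum_(i <- r | P i) mul c (F i).
Proof. by apply: (big_morph (mul c) (mulDr c) (mul0r c)). Qed.

Lemma Q_mul B j l b c : (l < B)%N ->
  Q j l (mul b c) = \sum_(i < B) mul (Q i l b) (Q j i c).
Proof.
elim: l j => [|l IH] j lB.
  rewrite (bigD1 (Ordinal lB)) //= big1 ?addr0.
    by rewrite !Q_base; case: eqP => _; rewrite ?mul0r.
  by move=> i /eqP ni; rewrite Q_base; case: eqP => [h|_]; [case: ni; apply: val_inj | rewrite mul0l].
case: B lB IH => [|B] lB IH //.
rewrite Q_rec (IH j) ?(ltn_trans _ lB) // delta_sum.
under eq_bigr do rewrite deltaM.
rewrite [RHS](eq_bigr (fun i : 'I_B.+1 => mul (if (i : nat) is i'.+1 then sigma (Q i' l b) else 0) (Q j i c)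
    + mul (delta (Q i l b)) (Q j i c))); last by move=> i _; rewrite Q_rec mulDl.
rewrite !big_split /= addrA; congr (_ + _).
rewrite [RHS]big_ord_recl /= mul0l add0r.
under [RHS]eq_bigr do rewrite add0n /bump add1n Q_rec mulDr.
rewrite big_split /= [X in _ + X = _]big_ord_recr /= (@Q_gt B l) // sigma0 mul0l addr0.
congr (_ + _).
case: j => [|j]; first by rewrite big1 // => i _; rewrite mul0r.
rewrite (IH j) ?(ltnW lB) // big_ord_recr /= (@Q_gt B l) // mul0l addr0.
by rewrite sigma_sum; apply: eq_bigr => i _; rewrite sigmaM.
Qed.

Variable alpha : R -> R.
Variable alphaD : forall a b, alpha (a + b) = alpha a + alpha b.
Variable alpha_delta : forall a, alpha (delta a) = delta (alpha a).
Variable alpha_sigma : forall a, alpha (sigma a) = sigma (alpha a).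

Lemma alpha0 : alpha 0 = 0.
Proof. have h := alphaD 0 0; rewrite addr0 in h. by apply: (addrI (alpha 0)); rewrite addr0 -h. Qed.

Lemma Q_alpha j m x : alpha (Q j m x) = Q j m (alpha x).
Proof.
elim: m j => [|m IH] j.
  by rewrite !Q_base; case: eqP => // _; rewrite alpha0.
rewrite !Q_rec alphaD alpha_delta IH; case: j => [|j]; first by rewrite alpha0.
by rewrite alpha_sigma IH.
Qed.


Lemma nth_alpha (u : seq R) m : (map alpha u)`_m = alpha u`_m.
Proof.
case: (ltnP m (size u)) => h; first exact: nth_map.
by rewrite !nth_default ?size_map // alpha0.
Qed.

Lemma nth_ore_mul (u v : seq R) k B : (size u <= B)%N -> (size v <= B)%N ->
  (ore_mul mul sigma delta u v)`_k =
  \sum_(m < B) \sum_(n < B) (if (n <= k)%N then mul u`_m (Q (k - n) m v`_n) else 0).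
Proof.
move=> uB vB.
case: (ltnP k (size u + size v)) => kl.
  rewrite nth_mkseq // /ore_coef (@widen_sum _ (size u) B (fun m => \sum_(n < size v) (if (n <= k)%N then mul u`_m (Q (k - n) m v`_n) else 0))) //; last first.
    by move=> i ui _; rewrite big1 // => n _; rewrite nth_default // mul0l; case: ifP.
  apply: eq_bigr => m _; apply: (@widen_sum _ (size v) B (fun n => if (n <= k)%N then mul u`_m (Q (k - n) m v`_n) else 0)) => // n vn _.
  by rewrite [v`_n]nth_default // Q0 mul0r; case: ifP.
rewrite nth_default ?size_mkseq //; symmetry.
rewrite big1 // => m _; rewrite big1 // => n _; case: ifP => // nk.
case: (ltnP m (size u)) => mu; last by rewrite nth_default // mul0l.
case: (ltnP n (size v)) => nv; last by rewrite [v`_n]nth_default // Q0 mul0r.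
by rewrite Q_gt ?mul0r //; lia.
Qed.

Variable homA : forall a b c, mul (alpha a) (mul b c) = mul (mul a b) (alpha c).

Lemma main_k (u v w : seq R) k :
  (ore_mul mul sigma delta (ore_alpha alpha u) (ore_mul mul sigma delta v w))`_k =
  (ore_mul mul sigma delta (ore_mul mul sigma delta u v) (ore_alpha alpha w))`_k.
Proof.
pose B := (size u + size v + size w + k.+1)%N.
have uB : (size u <= B)%N by rewrite /B; lia.
have vB : (size v <= B)%N by rewrite /B; lia.
have wB : (size w <= B)%N by rewrite /B; lia.
have uvB : (size u + size v <= B)%N by rewrite /B; lia.
have vwB : (size v + size w <= B)%N by rewrite /B; lia.
have kB : (k < B)%N by rewrite /B; lia.
pose T := \sum_(m < B) \sum_(p < B) \sum_(q < B) \sum_(i < B)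
   (if (q <= k)%N then mul (mul u`_m (Q i m v`_p)) (Q (k - q) (i + p) (alpha w`_q)) else 0).
transitivity T.
  rewrite /ore_alpha (nth_ore_mul _ _ _ B) ?size_map ?size_iota //.
  apply: eq_bigr => m _.
  transitivity (\sum_(n < B) \sum_(p < B) \sum_(q < B) \sum_(i < B)
     (if (q <= n <= k)%N then mul (mul u`_m (Q i m v`_p)) (Q (k - n) i (Q (n - q) p (alpha w`_q))) else 0)).
    apply: eq_bigr => n _; rewrite (nth_ore_mul _ _ _ B) //.
    case: ifP => nk; last first.
      by symmetry; do 3! (rewrite big1 // => ? _); rewrite andbF.
    rewrite Q_sum mul_sumr; apply: eq_bigr => p _; rewrite Q_sum mul_sumr; apply: eq_bigr => q _.
    rewrite andbT; case: ifP => qn; last by rewrite Q0 mul0r big1.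
    rewrite (Q_mul B) // mul_sumr; apply: eq_bigr => i _.
    by rewrite nth_alpha homA !Q_alpha.
  rewrite exchange_big; apply: eq_bigr => p _.
  rewrite exchange_big; apply: eq_bigr => q _.
  rewrite exchange_big; apply: eq_bigr => i _.
  case: ifP => qk.
    by rewrite (Q_comp B) // (mul_sumr (mul u`_m (Q i m v`_p))); apply: eq_bigr => n _; case: ifP; rewrite ?mul0r.
  rewrite big1 // => n _; case: ifP => // /andP [qn nk].
  by rewrite (leq_trans qn nk) in qk.
rewrite /ore_alpha (nth_ore_mul _ _ _ B) ?size_map ?size_iota //.
symmetry.
transitivity (\sum_(m' < B) \sum_(q < B) \sum_(m < B) \sum_(p < B)
   (if (p <= m')%N then (if (q <= k)%N then mul (mul u`_m (Q (m' - p) m v`_p)) (Q (k - q) m' (alpha w`_q)) else 0) else 0)).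
  apply: eq_bigr => m' _; apply: eq_bigr => q _.
  case: ifP => qk; last by symmetry; do 2! (rewrite big1 // => ? _); case: ifP.
  rewrite (nth_ore_mul _ _ _ B) // nth_alpha (mul_suml (Q (k - q) m' (alpha w`_q))); apply: eq_bigr => m _.
  by rewrite mul_suml; apply: eq_bigr => p _; case: ifP => // _; rewrite mul0l.
rewrite /T.
under eq_bigr => m' _ do rewrite exchange_big.
under eq_bigr => m' _ do under eq_bigr => m _ do rewrite exchange_big.
rewrite exchange_big; apply: eq_bigr => m _.
rewrite exchange_big; apply: eq_bigr => p _.
rewrite exchange_big; apply: eq_bigr => q _.
symmetry; apply: (@reindex_shift _ B p (fun i m' => if (q <= k)%N then mul (mul u`_m (Q i m v`_p)) (Q (k - q) m' (alpha w`_q)) else 0)).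
move=> i ipB iB; case: ifP => // _.
case: (ltnP m (size u)) => mu; last by rewrite nth_default // !mul0l.
case: (ltnP p (size v)) => pv; last by rewrite [v`_p]nth_default // Q0 mul0r mul0l.
by rewrite Q_gt ?mul0r ?mul0l //; lia.
Qed.

End S.

Theorem mainTheorem8 (R : zmodType) (mul : R -> R -> R)
  (alpha sigma delta : R -> R)
  (* biadditive multiplication *)
  (mulDl : forall a b c, mul (a + b) c = mul a c + mul b c)
  (mulDr : forall a b c, mul a (b + c) = mul a b + mul a c)
  (* alpha additive, hom-associativity of R *)
  (alphaD : forall a b, alpha (a + b) = alpha a + alpha b)
  (homA : forall a b c, mul (alpha a) (mul b c) = mul (mul a b) (alpha c))
  (* sigma a (non-unital) ring endomorphism *)
  (sigmaD : forall a b, sigma (a + b) = sigma a + sigma b)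
  (sigmaM : forall a b, sigma (mul a b) = mul (sigma a) (sigma b))
  (* delta a sigma-derivation *)
  (deltaD : forall a b, delta (a + b) = delta a + delta b)
  (deltaM : forall a b, delta (mul a b) = mul (sigma a) (delta b) + mul (delta a) b)
  (* commutation hypotheses *)
  (alpha_delta : forall a, alpha (delta a) = delta (alpha a))
  (alpha_sigma : forall a, alpha (sigma a) = sigma (alpha a)) :
  forall u v w : seq R,
    ore_eq (ore_mul mul sigma delta (ore_alpha alpha u) (ore_mul mul sigma delta v w))
           (ore_mul mul sigma delta (ore_mul mul sigma delta u v) (ore_alpha alpha w)).
Proof.
move=> u v w; rewrite /ore_eq => k.
have H := (@main_k R sigma delta sigmaD deltaD mul mulDl mulDr sigmaM deltaM alpha alphaD alpha_delta alpha_sigma homA u v w k).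
exact H.
Qed.
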